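(* (Hyperdense coding with local continuous reversibility but without tomographic locality.) Let $N\ge2$, $n=2^N-1$, $m\ge1$. Let $\Omega_A=\Omega_B=\Omega^{(n)}_m$ with local effect set $\mathcal E_{\mathrm{loc}}$, local transformations $\mathcal T=\{T^{(R)}_\mu\}$, entangled states $\Phi_\mu$, joint state space $\Omega_{AB}$ and effects $F_y$ as in the context. Then: (a) $\Lambda:=\{T\Phi_{\mathbf 0}T'^{\mathrm t}:T,T'\in\mathcal T\}=\{\Phi_\mu\}_{\mu\in\{0,1\}^N}$, and $\Omega_A\otimes_{\min}\Omega_B\subseteq\Omega_{AB}\subseteq\Omega_A\otimes_{\max}\Omega_B$; (b) every $T\in\mathcal T$ maps $\Omega_A$ into itself and $\Omega_{AB}$ into itself (acting on either side), and any two pure local states are connected by elements of $\mathcal T$ depending continuously on an $\mathrm{SO}(m)$ parameter; (c) $(e\otimes f)\cdot\Phi_\mu$ does not depend on $\mu$ for any $e,f\in\mathcal E_{\mathrm{loc}}$, although the $\Phi_\mu$ are pairwise distinct (tomographic locality fails); (d) each $F_y$ lies in $\mathcal E_{AB}$, $\sum_yF_y=u\otimes u$, and $F_y\cdot(T^{(R)}_x\Phi_{\mathbf 0})=F_y\cdot\Phi_x=\delta_{y,x}$; hence the dense coding protocol (shared $\Phi_{\mathbf 0}$, encoding by $T^{(R)}_x$, decoding by $\{F_y\}$, uniform $x\in\{0,1\}^N$) achieves $I(X:Y)=N$, while the classical capacity of each local system is $1$ bit.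
   Context: $\Omega^{(n)}_m=\{(1,\mathbf 0,r)^{\mathrm t}:\mathbf 0\in\mathbb R^n,\ r\in\mathbb R^m,\ \lVert r\rVert\le1\}\subset\mathbb R^{1+n+m}$, unit effect $u=(1,\mathbf 0)^{\mathrm t}$ (zero in $\mathbb R^{n+m}$), local effect set $\mathcal E_{\mathrm{loc}}=$ convex hull of the zero vector, $u$, and $\tfrac12(1,\mathbf 0,r)^{\mathrm t}$ for unit $r\in\mathbb R^m$. Classical capacity is defined as the supremum of $I(X:Y)$ over finite message distributions, states and measurements (families in $\mathcal E_{\mathrm{loc}}$ summing to $u$) with $p(y|x)=e_y\cdot\omega_x$. Bipartite states are real $(1+n+m)\times(1+n+m)$ matrices, identified with tensors via $v\otimes w=vw^{\mathrm t}$, inner product $X\cdot Y=\mathrm{Tr}(X^{\mathrm t}Y)$; $\Omega_A\otimes_{\min}\Omega_B$ is the convex hull of product states; $\Omega_A\otimes_{\max}\Omega_B=\{\phi:(u\otimes u)\cdot\phi=1,(e\otimes f)\cdot\phi\ge0\ \forall e,f\in\mathcal E_{\mathrm{loc}}\}$. Coordinates of $\mathbb R^{2^N}$ are indexed by $\nu\in\{0,1\}^N$ with $\nu=\mathbf 0$ first; $(d_\mu)_\nu=(-1)^{\mu\cdot\nu}$ ($\mu\cdot\nu$ = inner product mod 2); $\phi_\mu=T_\mu=\mathrm{diag}(d_\mu)$ ($2^N\times2^N$), $E_\mu=2^{-N}\phi_\mu$. Define $T^{(R)}_\mu=\begin{pmatrix}T_\mu&0\\0&R\end{pmatrix}$ for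 $R\in\mathrm{SO}(m)$ and $\mu\in\{0,1\}^N$, $\mathcal T=\{T^{(R)}_\mu\}$; $\Phi_\mu=\begin{pmatrix}\phi_\mu&0\\0&0\end{pmatrix}$ (zero $m\times m$ block); $\Omega_{AB}=$ convex hull of $\Omega_A\otimes_{\min}\Omega_B\cup\Lambda$; $\mathcal E_{AB}=\{E:0\le E\cdot\phi\le1\ \forall\phi\in\Omega_{AB}\}$; $F_y=2^{-N}\Phi_y$. Local transformations act on $A$ as $\phi\mapsto T\phi$ and on $B$ as $\phi\mapsto\phi T^{\mathrm t}$. *)

(* Defs.v *)
From Stdlib Require Import Reals Lra Lia List Arith.
Open Scope R_scope.

Fixpoint sumR (k : nat) (f : nat -> R) : R :=
  match k with O => 0 | S k' => sumR k' f + f k' end.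

(** Vectors / matrices are functions on indices; all concrete objects below
    are zero outside the relevant index range, so Leibniz equality is used. *)
Definition vec := nat -> R.
Definition mat := nat -> nat -> R.

Definition vadd (v w : vec) : vec := fun i => v i + w i.
Definition vscal (a : R) (v : vec) : vec := fun i => a * v i.
Definition vzero : vec := fun _ => 0.
Definition madd (A B : mat) : mat := fun i j => A i j + B i j.
Definition mscal (a : R) (A : mat) : mat := fun i j => a * A i j.
Definition mzero : mat := fun _ _ => 0.

Definition dotv (d : nat) (v w : vec) : R := sumR d (fun i => v i * w i).
Definition dotm (d : nat) (X Y : mat) : R :=
  sumR d (fun i => sumR d (fun j => X i j * Y i j)).
Definition mmul (d : nat) (A B : mat) : mat :=
  fun i j => sumR d (fun k => A i k * B k j).
Definition mvec (d : nat) (A : mat) (v : vec) : vec :=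
  fun i => sumR d (fun k => A i k * v k).
Definition trans (A : mat) : mat := fun i j => A j i.
Definition tens (v w : vec) : mat := fun i j => v i * w j.

Definition conv {X : Type} (z : X) (add : X -> X -> X) (sc : R -> X -> X)
  (P : X -> Prop) (x : X) : Prop :=
  exists l : list (R * X),
    Forall (fun p => 0 <= fst p /\ P (snd p)) l /\
    fold_right (fun p s => fst p + s) 0 l = 1 /\
    x = fold_right (fun p s => add (sc (fst p) (snd p)) s) z l.

Definition convv := @conv vec vzero vadd vscal.
Definition convm := @conv mat mzero madd mscal.

Definition minor (j : nat) (M : mat) : mat :=
  fun i k => M (S i) (if (k <? j)%nat then k else S k).
Fixpoint det (n : nat) (M : mat) : R :=
  match n with
  | O => 1
  | S n' => sumR (S n') (fun j => (-1) ^ j * M O j * det n' (minor j M))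
  end.

Definition kdelta (i j : nat) : R := if (i =? j)%nat then 1 else 0.

(** R in SO(m) (only the m x m block of the function matters). *)
Definition SO (m : nat) (Rm : mat) : Prop :=
  (forall i j, (i < m)%nat -> (j < m)%nat ->
     sumR m (fun k => Rm k i * Rm k j) = kdelta i j) /\
  det m Rm = 1.

Definition idmat (m : nat) : mat :=
  fun i j => if ((i <? m) && (i =? j))%bool then 1 else 0.

Section Model.
(* Dimensions: n = 2^N - 1, total dimension 1+n+m = 2^N + m. *)

Definition dimN (N : nat) : nat := 2 ^ N.
Definition Dim (N m : nat) : nat := (2 ^ N + m)%nat.

(** mu . nu mod 2, with mu, nu in {0,1}^N encoded in binary as nats < 2^N
    (so nu = 0 is the first coordinate). *)
Fixpoint bitdot (N mu nu : nat) : nat :=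
  match N with
  | O => O
  | S k => (bitdot k mu nu + (if (Nat.testbit mu k && Nat.testbit nu k)%bool then 1 else 0))%nat
  end.

Definition dsign (N mu nu : nat) : R := (-1) ^ (bitdot N mu nu).

(** The state (1, 0, r) in R^{1+n+m}. *)
Definition stateOf (N m : nat) (r : vec) : vec :=
  fun i => if (i =? 0)%nat then 1
           else if ((2 ^ N <=? i) && (i <? 2 ^ N + m))%bool then r (i - 2 ^ N)%nat
           else 0.

Definition normsq (m : nat) (r : vec) : R := sumR m (fun i => r i * r i).

Definition Omega (N m : nat) (w : vec) : Prop :=
  exists r : vec, normsq m r <= 1 /\ w = stateOf N m r.

Definition uvec : vec := fun i => if (i =? 0)%nat then 1 else 0.

Definition Eloc (N m : nat) (e : vec) : Prop :=
  convv (fun v => v = vzero \/ v = uvec \/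
           exists r, normsq m r = 1 /\ v = vscal (/2) (stateOf N m r)) e.

Definition pure (N m : nat) (w : vec) : Prop :=
  Omega N m w /\
  forall w1 w2 p, 0 < p < 1 -> Omega N m w1 -> Omega N m w2 ->
    w = vadd (vscal p w1) (vscal (1 - p) w2) -> w1 = w /\ w2 = w.

Definition Phi (N mu : nat) : mat :=
  fun i j => if ((i <? 2 ^ N) && (i =? j))%bool then dsign N mu i else 0.

Definition Tblock (N m mu : nat) (Rm : mat) : mat :=
  fun i j =>
    if ((i <? 2 ^ N) && (j <? 2 ^ N))%bool then
      (if (i =? j)%nat then dsign N mu i else 0)
    else if ((2 ^ N <=? i) && (i <? 2 ^ N + m) && (2 ^ N <=? j) && (j <? 2 ^ N + m))%bool
    then Rm (i - 2 ^ N)%nat (j - 2 ^ N)%nat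
    else 0.

Definition inT (N m : nat) (T : mat) : Prop :=
  exists mu Rm, (mu < 2 ^ N)%nat /\ SO m Rm /\ T = Tblock N m mu Rm.

Definition Lambda (N m : nat) (phi : mat) : Prop :=
  exists T T', inT N m T /\ inT N m T' /\
    phi = mmul (Dim N m) (mmul (Dim N m) T (Phi N 0)) (trans T').

Definition OmegaMin (N m : nat) : mat -> Prop :=
  convm (fun phi => exists w w', Omega N m w /\ Omega N m w' /\ phi = tens w w').

Definition OmegaMax (N m : nat) (phi : mat) : Prop :=
  dotm (Dim N m) (tens uvec uvec) phi = 1 /\
  forall e f, Eloc N m e -> Eloc N m f -> 0 <= dotm (Dim N m) (tens e f) phi.

Definition OmegaAB (N m : nat) : mat -> Prop :=
  convm (fun phi => OmegaMin N m phi \/ Lambda N m phi).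

Definition EAB (N m : nat) (E : mat) : Prop :=
  forall phi, OmegaAB N m phi -> 0 <= dotm (Dim N m) E phi <= 1.

Definition Feff (N y : nat) : mat := mscal (/ 2 ^ N) (Phi N y).

Definition log2 (x : R) : R := ln x / ln 2.
Definition mutual_info (nx ny : nat) (px : nat -> R) (pyx : nat -> nat -> R) : R :=
  let py := fun y => sumR nx (fun x => px x * pyx x y) in
  sumR nx (fun x => sumR ny (fun y =>
    let pxy := px x * pyx x y in
    if Req_EM_T pxy 0 then 0 else pxy * log2 (pyx x y / py y))).

Definition cap_achievable (N m : nat) (I : R) : Prop :=
  exists (nx ny : nat) (px : nat -> R) (om e : nat -> vec),
    (forall x, (x < nx)%nat -> 0 <= px x) /\ sumR nx px = 1 /\
    (forall x, (x < nx)%nat -> Omega N m (om x)) /\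
    (forall y, (y < ny)%nat -> Eloc N m (e y)) /\
    (fun i => sumR ny (fun y => e y i)) = uvec /\
    I = mutual_info nx ny px (fun x y => dotv (Dim N m) (e y) (om x)).

Definition capacity_is (N m : nat) (c : R) : Prop := is_lub (cap_achievable N m) c.

End Model.

(* Main.v *)
Require Import Defs.
From Stdlib Require Import Reals Lra Lia List Arith FunctionalExtensionality.
From mathcomp Require ssreflect ssrfun ssrbool eqtype ssrnat seq fintype bigop ssralg matrix.
From mathcomp Require Rstruct.
Open Scope R_scope.

Ltac bsimp := repeat match goal with
 | |- context [ (?a =? ?b)%nat ] => destruct (Nat.eqb_spec a b)
 | |- context [ (?a <? ?b)%nat ] => destruct (Nat.ltb_spec a b)
 | |- context [ (?a <=? ?b)%nat ] => destruct (Nat.leb_spec a b)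
 end; simpl.

Lemma sumR_ext n f g : (forall i, (i < n)%nat -> f i = g i) -> sumR n f = sumR n g.
Proof. induction n; simpl; intros H; auto. rewrite IHn by (intros; apply H; lia). rewrite H by lia. auto. Qed.

Lemma sumR_plus n f g : sumR n (fun i => f i + g i) = sumR n f + sumR n g.
Proof. induction n; simpl; [lra|]. rewrite IHn. lra. Qed.

Lemma sumR_minus n f g : sumR n (fun i => f i - g i) = sumR n f - sumR n g.
Proof. induction n; simpl; [lra|]. rewrite IHn. lra. Qed.

Lemma sumR_scal n c f : sumR n (fun i => c * f i) = c * sumR n f.
Proof. induction n; simpl; [lra|]. rewrite IHn. lra. Qed.

Lemma sumR_scal_r n c f : sumR n (fun i => f i * c) = sumR n f * c.
Proof. induction n; simpl; [lra|]. rewrite IHn. lra. Qed.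

Lemma sumR_zero n f : (forall i, (i < n)%nat -> f i = 0) -> sumR n f = 0.
Proof. induction n; simpl; intros H; auto. rewrite IHn by (intros; apply H; lia). rewrite H by lia. lra. Qed.

Lemma sumR_const n c : sumR n (fun _ => c) = INR n * c.
Proof. induction n; simpl sumR; [simpl; lra|]. rewrite IHn, S_INR. lra. Qed.

Lemma sumR_add_range a b f : sumR (a + b) f = sumR a f + sumR b (fun k => f (a + k)%nat).
Proof. induction b; simpl. rewrite Nat.add_0_r; lra. rewrite Nat.add_succ_r. simpl. rewrite IHb. lra. Qed.

Lemma sumR_delta n j g : sumR n (fun k => if (k =? j)%nat then g k else 0) = if (j <? n)%nat then g j else 0.
Proof. induction n; simpl; auto. rewrite IHn. bsimp; subst; try lia; lra. Qed.

Lemma sumR_delta' n j g : sumR n (fun k => if (j =? k)%nat then g k else 0) = if (j <? n)%nat then g j else 0.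
Proof. rewrite <- sumR_delta. apply sumR_ext. intros. bsimp; auto; lia. Qed.

Lemma sumR_swap n d (f : nat -> nat -> R) :
  sumR n (fun y => sumR d (fun i => f y i)) = sumR d (fun i => sumR n (fun y => f y i)).
Proof. induction n; simpl. rewrite sumR_zero; auto. rewrite IHn, <- sumR_plus. auto. Qed.

Lemma sumR_first n f : (1 <= n)%nat -> (forall i, (1 <= i < n)%nat -> f i = 0) -> sumR n f = f O.
Proof. intros Hn H. destruct n; [lia|]. replace (S n) with (1 + n)%nat by lia.
  rewrite sumR_add_range. rewrite (sumR_zero n). simpl sumR. lra. intros; apply H; lia. Qed.

Lemma sumR_nonneg n f : (forall i, (i < n)%nat -> 0 <= f i) -> 0 <= sumR n f.
Proof. induction n; simpl; intros; [lra|]. assert (0 <= f n) by (apply H; lia).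
  assert (0 <= sumR n f) by (apply IHn; intros; apply H; lia). lra. Qed.

Lemma sumR_le n f g : (forall i, (i < n)%nat -> f i <= g i) -> sumR n f <= sumR n g.
Proof. induction n; simpl; intros; [lra|]. assert (f n <= g n) by (apply H; lia).
  assert (sumR n f <= sumR n g) by (apply IHn; intros; apply H; lia). lra. Qed.

Lemma sumR_term_le n f j : (j < n)%nat -> (forall i, (i < n)%nat -> 0 <= f i) -> f j <= sumR n f.
Proof. induction n; simpl; intros; [lia|]. destruct (Nat.eq_dec j n).
  subst. assert (0 <= sumR n f) by (apply sumR_nonneg; intros; apply H0; lia). lra.
  assert (f j <= sumR n f) by (apply IHn; [lia|intros; apply H0; lia]). assert (0 <= f n) by (apply H0; lia). lra. Qed.

Lemma bitdot_congr N a a' i i' :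
  (forall k, (k < N)%nat -> Nat.testbit a k = Nat.testbit a' k) ->
  (forall k, (k < N)%nat -> Nat.testbit i k = Nat.testbit i' k) ->
  bitdot N a i = bitdot N a' i'.
Proof. induction N; simpl; intros Ha Hi; auto.
  rewrite IHN by (intros; auto). rewrite Ha, Hi by lia. auto. Qed.

Lemma bitdot_sym N a b : bitdot N a b = bitdot N b a.
Proof. induction N; simpl; auto. rewrite IHN, Bool.andb_comm. auto. Qed.

Lemma bitdot_0 N a : bitdot N a 0 = 0%nat.
Proof. induction N; simpl; auto. rewrite IHN, Nat.bits_0, Bool.andb_false_r. auto. Qed.

Lemma dsign_0r N a : dsign N a 0 = 1.
Proof. unfold dsign. rewrite bitdot_0. simpl. lra. Qed.

Lemma dsign_0l N a : dsign N 0 a = 1.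
Proof. unfold dsign. rewrite bitdot_sym, bitdot_0. simpl. lra. Qed.

Lemma dsign_sym N a b : dsign N a b = dsign N b a.
Proof. unfold dsign. rewrite bitdot_sym. auto. Qed.

Lemma dsign_S N a i : dsign (S N) a i = dsign N a i *
  (if (Nat.testbit a N && Nat.testbit i N)%bool then -1 else 1).
Proof. unfold dsign. simpl bitdot. rewrite pow_add. destruct (Nat.testbit a N && Nat.testbit i N)%bool; simpl; lra. Qed.

Lemma dsign_mul N a b i : dsign N a i * dsign N b i = dsign N (Nat.lxor a b) i.
Proof. induction N. unfold dsign; simpl; lra.
  rewrite !dsign_S. rewrite Nat.lxor_spec.
  destruct (Nat.testbit a N), (Nat.testbit b N), (Nat.testbit i N); simpl;
  rewrite <- IHN; lra. Qed.

Lemma dsign_sq N a i : dsign N a i * dsign N a i = 1.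
Proof. rewrite dsign_mul, Nat.lxor_nilpotent. apply dsign_0l. Qed.

Lemma testbit_low_lt N i : (i < 2 ^ N)%nat -> forall k, (N <= k)%nat -> Nat.testbit i k = false.
Proof. intros H k Hk. rewrite <- (Nat.mod_small i (2^N)) by auto.
  apply Nat.mod_pow2_bits_high. lia. Qed.

Lemma testbit_shift N i k : (i < 2 ^ N)%nat -> (k < N)%nat -> Nat.testbit (i + 2 ^ N) k = Nat.testbit i k.
Proof. intros H Hk. rewrite <- (Nat.mod_pow2_bits_low (i + 2^N) N k) by auto.
  replace (i + 2^N)%nat with (i + 1 * 2^N)%nat by lia. rewrite Nat.Div0.mod_add.
  rewrite Nat.mod_small by auto. auto. Qed.

Lemma testbit_shift_top N i : (i < 2 ^ N)%nat -> Nat.testbit (i + 2 ^ N) N = true.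
Proof. intros H. pose proof (Nat.div_pow2_bits (i + 2^N) N 0) as E. simpl in E. rewrite <- E.
  replace (i + 2^N)%nat with (i + 1 * 2^N)%nat by lia. rewrite Nat.div_add by (apply Nat.pow_nonzero; lia).
  rewrite Nat.div_small by auto. reflexivity. Qed.

Lemma pow2_pos N : (0 < 2 ^ N)%nat.
Proof. apply Nat.neq_0_lt_0, Nat.pow_nonzero. lia. Qed.

Lemma char_sum N a :
  sumR (2 ^ N) (fun i => dsign N a i) =
  if (forallb (fun k => negb (Nat.testbit a k)) (seq 0 N)) then INR (2 ^ N) else 0.
Proof. induction N.
- simpl. unfold dsign; simpl. lra.
- rewrite Nat.pow_succ_r', Nat.mul_comm. simpl (2 ^ N * 2)%nat.
  replace (2 ^ N * 2)%nat with (2^N + 2^N)%nat by lia.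
  rewrite sumR_add_range.
  rewrite (sumR_ext (2^N) (fun i => dsign (S N) a i) (fun i => dsign N a i)).
  2:{ intros i Hi. rewrite dsign_S, (testbit_low_lt N i Hi N) by lia. rewrite Bool.andb_false_r. lra. }
  rewrite (sumR_ext (2^N) (fun k => dsign (S N) a (2^N + k)) (fun i => dsign N a i * (if Nat.testbit a N then -1 else 1))).
  2:{ intros i Hi. rewrite dsign_S. rewrite Nat.add_comm, testbit_shift_top by auto. rewrite Bool.andb_true_r.
      f_equal. unfold dsign. f_equal. apply bitdot_congr; auto. intros; apply testbit_shift; auto. }
  rewrite sumR_scal_r. change (fun i : nat => dsign N a i) with (dsign N a) in *. rewrite IHN. rewrite seq_S, forallb_app. simpl.
  destruct (Nat.testbit a N); simpl; rewrite ?Bool.andb_false_r, ?Bool.andb_true_r;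
  destruct (forallb _ _); rewrite ?plus_INR; lra.
Qed.

Lemma forallb_seq_bits N a :
  forallb (fun k => negb (Nat.testbit a k)) (seq 0 N) = true <-> forall k, (k < N)%nat -> Nat.testbit a k = false.
Proof. rewrite forallb_forall. split; intros H k Hk.
  - assert (In k (seq 0 N)) by (apply in_seq; lia). specialize (H k H0). destruct (Nat.testbit a k); auto.
  - apply in_seq in Hk. rewrite H by lia. auto. Qed.

Lemma char_orth N x y : (x < 2 ^ N)%nat -> (y < 2 ^ N)%nat ->
  sumR (2 ^ N) (fun i => dsign N y i * dsign N x i) = if (y =? x)%nat then INR (2 ^ N) else 0.
Proof. intros Hx Hy.
  rewrite (sumR_ext _ _ (fun i => dsign N (Nat.lxor y x) i)) by (intros; apply dsign_mul).
  rewrite char_sum.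
  destruct (forallb _ _) eqn:E; destruct (Nat.eqb_spec y x); auto.
  - exfalso. apply n. apply Nat.bits_inj. intros k.
    rewrite forallb_seq_bits in E. destruct (Nat.lt_ge_cases k N).
    + specialize (E k H). rewrite Nat.lxor_spec in E. destruct (Nat.testbit y k), (Nat.testbit x k); simpl in *; congruence.
    + rewrite !(testbit_low_lt N) by auto. auto.
  - subst. rewrite Nat.lxor_nilpotent in E. simpl in E.
    assert (forallb (fun k => negb (Nat.testbit 0 k)) (seq 0 N) = true) by (apply forallb_seq_bits; intros; apply Nat.bits_0).
    congruence.
Qed.

Lemma sum_dsign_col N i : (i < 2 ^ N)%nat ->
  sumR (2 ^ N) (fun y => dsign N y i) = if (i =? 0)%nat then INR (2 ^ N) else 0.
Proof. intros Hi. rewrite (sumR_ext _ _ (fun y => dsign N y i * dsign N 0 y)).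
  2:{ intros. rewrite dsign_0l. lra. }
  rewrite (sumR_ext _ _ (fun y => dsign N i y * dsign N 0 y)) by (intros; rewrite dsign_sym; auto).
  rewrite <- (char_orth N 0 i) by (auto; apply pow2_pos).
  reflexivity. Qed.

Lemma lxor_lt N a b : (a < 2 ^ N)%nat -> (b < 2 ^ N)%nat -> (Nat.lxor a b < 2 ^ N)%nat.
Proof. intros Ha Hb. destruct (Nat.lt_ge_cases (Nat.lxor a b) (2^N)); auto. exfalso.
  destruct (Nat.eq_dec (Nat.lxor a b) 0). rewrite e in H. pose proof (pow2_pos N). lia.
  assert (Nat.testbit (Nat.lxor a b) (Nat.log2 (Nat.lxor a b)) = true) by (apply Nat.bit_log2; auto).
  rewrite Nat.lxor_spec in H0. assert (N <= Nat.log2 (Nat.lxor a b))%nat.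
  { apply Nat.log2_le_pow2; lia. }
  rewrite !(testbit_low_lt N) in H0 by auto. discriminate. Qed.

Lemma dsign_distinct N mu mu' : (mu < 2 ^ N)%nat -> (mu' < 2 ^ N)%nat -> mu <> mu' ->
  exists i, (i < 2 ^ N)%nat /\ dsign N mu i <> dsign N mu' i.
Proof. intros H1 H2 H3.
  destruct (Classical_Prop.classic (exists i, (i < 2 ^ N)%nat /\ dsign N mu i <> dsign N mu' i)); auto.
  exfalso. assert (E : sumR (2 ^ N) (fun i => dsign N mu i * dsign N mu' i) = INR (2^N)).
  { rewrite <- (Rmult_1_r (INR (2^N))), <- sumR_const. apply sumR_ext. intros i Hi.
    destruct (Req_dec (dsign N mu i) (dsign N mu' i)). rewrite <- H0. apply dsign_sq.
    exfalso; eauto. }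
  rewrite char_orth in E by auto. destruct (Nat.eqb_spec mu mu'); [congruence|].
  pose proof (pow2_pos N). apply lt_0_INR in H0. lra. Qed.

Section ConvLin.
Variables (X : Type) (z : X) (add : X -> X -> X) (sc : R -> X -> X) (g : X -> R).
Hypotheses (gz : g z = 0) (gadd : forall x y, g (add x y) = g x + g y)
  (gsc : forall a x, g (sc a x) = a * g x).

Lemma conv_ge (P : X -> Prop) lo : (forall x, P x -> lo <= g x) ->
  forall x, conv z add sc P x -> lo <= g x.
Proof. intros H x [l [Hf [Hs Hx]]]. subst x.
  assert (forall l, Forall (fun p => 0 <= fst p /\ P (snd p)) l ->
     lo * fold_right (fun p s => fst p + s) 0 l <= g (fold_right (fun p s => add (sc (fst p) (snd p)) s) z l)).
  { induction l0; simpl; intros HF. rewrite gz; lra.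
    inversion HF; subst. destruct H2. rewrite gadd, gsc. specialize (IHl0 H3). specialize (H _ H1).
    assert (fst a * lo <= fst a * g (snd a)) by (apply Rmult_le_compat_l; auto). nra. }
  specialize (H0 l Hf). rewrite Hs in H0. lra. Qed.

Lemma conv_le (P : X -> Prop) hi : (forall x, P x -> g x <= hi) ->
  forall x, conv z add sc P x -> g x <= hi.
Proof. intros H x [l [Hf [Hs Hx]]]. subst x.
  assert (forall l, Forall (fun p => 0 <= fst p /\ P (snd p)) l ->
     g (fold_right (fun p s => add (sc (fst p) (snd p)) s) z l) <= hi * fold_right (fun p s => fst p + s) 0 l).
  { induction l0; simpl; intros HF. rewrite gz; lra.
    inversion HF; subst. destruct H2. rewrite gadd, gsc. specialize (IHl0 H3). specialize (H _ H1).
    assert (fst a * g (snd a) <= fst a * hi) by (apply Rmult_le_compat_l; auto). nra. }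
  specialize (H0 l Hf). rewrite Hs in H0. lra. Qed.

Lemma conv_eq (P : X -> Prop) c : (forall x, P x -> g x = c) ->
  forall x, conv z add sc P x -> g x = c.
Proof. intros H x Hx. apply Rle_antisym.
  apply (conv_le P c); auto. intros; rewrite H; auto; lra.
  apply (conv_ge P c); auto. intros; rewrite H; auto; lra. Qed.
End ConvLin.

Lemma conv_map {X Y : Type} zx addx scx zy addy scy (L : X -> Y) (P : X -> Prop) (Q : Y -> Prop) :
  L zx = zy -> (forall x y, L (addx x y) = addy (L x) (L y)) -> (forall a x, L (scx a x) = scy a (L x)) ->
  (forall x, P x -> Q (L x)) ->
  forall x, conv zx addx scx P x -> conv zy addy scy Q (L x).
Proof. intros Hz Ha Hs HPQ x [l [Hf [Hsum Hx]]]. subst x.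
  exists (map (fun p => (fst p, L (snd p))) l). split; [|split].
  - rewrite Forall_map. eapply Forall_impl; [|exact Hf]. simpl. intros p [? ?]; auto.
  - rewrite <- Hsum. clear. induction l; simpl; auto. rewrite IHl; auto.
  - clear Hf Hsum. induction l; simpl; auto. rewrite Ha, Hs, IHl. auto. Qed.

Lemma conv_mono {X : Type} z add sc (P Q : X -> Prop) : (forall x, P x -> Q x) ->
  forall x, conv z add sc P x -> conv z add sc Q x.
Proof. intros H x Hx. pose proof (conv_map z add sc z add sc (fun x => x) P Q eq_refl (fun _ _ => eq_refl) (fun _ _ => eq_refl) H x Hx). auto. Qed.

Lemma convv_single P v : P v -> convv P v.
Proof. intros. exists ((1, v) :: nil). split; [|split].
  constructor; auto. simpl. split; auto; lra. simpl; lra.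
  extensionality i. unfold vadd, vscal, vzero; cbn. lra. Qed.

Lemma convm_single P v : P v -> convm P v.
Proof. intros. exists ((1, v) :: nil). split; [|split].
  constructor; auto. simpl. split; auto; lra. simpl; lra.
  extensionality i. extensionality j. unfold madd, mscal, mzero; cbn. lra. Qed.

Lemma dotv_vadd d v w x : dotv d x (vadd v w) = dotv d x v + dotv d x w.
Proof. unfold dotv, vadd. rewrite <- sumR_plus. apply sumR_ext; intros; lra. Qed.
Lemma dotv_vscal d a v x : dotv d x (vscal a v) = a * dotv d x v.
Proof. unfold dotv, vscal. rewrite <- sumR_scal. apply sumR_ext; intros; lra. Qed.
Lemma dotv_vzero d x : dotv d x vzero = 0.
Proof. unfold dotv, vzero. apply sumR_zero; intros; lra. Qed.
Lemma dotv_vadd_l d v w x : dotv d (vadd v w) x = dotv d v x + dotv d w x.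
Proof. unfold dotv, vadd. rewrite <- sumR_plus. apply sumR_ext; intros; lra. Qed.
Lemma dotv_vscal_l d a v x : dotv d (vscal a v) x = a * dotv d v x.
Proof. unfold dotv, vscal. rewrite <- sumR_scal. apply sumR_ext; intros; lra. Qed.
Lemma dotv_vzero_l d x : dotv d vzero x = 0.
Proof. unfold dotv, vzero. apply sumR_zero; intros; lra. Qed.

Lemma dotm_madd d A B X : dotm d X (madd A B) = dotm d X A + dotm d X B.
Proof. unfold dotm, madd. rewrite <- sumR_plus. apply sumR_ext; intros.
  rewrite <- sumR_plus. apply sumR_ext; intros; lra. Qed.
Lemma dotm_mscal d a A X : dotm d X (mscal a A) = a * dotm d X A.
Proof. unfold dotm, mscal. rewrite <- sumR_scal. apply sumR_ext; intros.
  rewrite <- sumR_scal. apply sumR_ext; intros; lra. Qed.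
Lemma dotm_mzero d X : dotm d X mzero = 0.
Proof. unfold dotm, mzero. apply sumR_zero; intros. apply sumR_zero; intros; lra. Qed.
Lemma dotm_mscal_l d a A X : dotm d (mscal a A) X = a * dotm d A X.
Proof. unfold dotm, mscal. rewrite <- sumR_scal. apply sumR_ext; intros.
  rewrite <- sumR_scal. apply sumR_ext; intros; lra. Qed.

Lemma dotm_tens d e f w w' : dotm d (tens e f) (tens w w') = dotv d e w * dotv d f w'.
Proof. unfold dotm, tens, dotv. rewrite <- sumR_scal_r. apply sumR_ext; intros.
  rewrite <- sumR_scal. apply sumR_ext; intros; lra. Qed.

Lemma pow2_ge1 N : (1 <= 2 ^ N)%nat.
Proof. pose proof (pow2_pos N). lia. Qed.

Lemma stateOf_0 N m r : stateOf N m r O = 1.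
Proof. reflexivity. Qed.
Lemma stateOf_mid N m r i : (1 <= i < 2 ^ N)%nat -> stateOf N m r i = 0.
Proof. intros. unfold stateOf. bsimp; auto; lia. Qed.
Lemma stateOf_hi N m r k : (k < m)%nat -> stateOf N m r (2 ^ N + k)%nat = r k.
Proof. intros. unfold stateOf. pose proof (pow2_pos N). bsimp; try lia. f_equal. lia. Qed.

Lemma dotv_state N m v r : dotv (Dim N m) v (stateOf N m r) = v O + sumR m (fun k => v (2 ^ N + k)%nat * r k).
Proof. unfold dotv, Dim. rewrite sumR_add_range. rewrite sumR_first by (apply pow2_ge1 || (intros; rewrite stateOf_mid by lia; lra)).
  rewrite stateOf_0. f_equal. lra. apply sumR_ext; intros. rewrite stateOf_hi; auto. Qed.

Lemma dot_bounds m r r' : normsq m r' = 1 -> normsq m r <= 1 ->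
  -1 <= sumR m (fun k => r' k * r k) <= 1.
Proof. unfold normsq. intros H1 H2.
  assert (0 <= sumR m (fun k => (r' k + r k) * (r' k + r k))) by (apply sumR_nonneg; intros; apply Rle_0_sqr).
  assert (0 <= sumR m (fun k => (r' k - r k) * (r' k - r k))) by (apply sumR_nonneg; intros; apply Rle_0_sqr).
  replace (sumR m (fun k => (r' k + r k) * (r' k + r k))) with
    (sumR m (fun k => r' k * r' k) + 2 * sumR m (fun k => r' k * r k) + sumR m (fun k => r k * r k)) in H.
  2:{ rewrite <- sumR_scal, <- !sumR_plus. apply sumR_ext; intros; ring. }
  replace (sumR m (fun k => (r' k - r k) * (r' k - r k))) with
    (sumR m (fun k => r' k * r' k) - 2 * sumR m (fun k => r' k * r k) + sumR m (fun k => r k * r k)) in H0.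
  2:{ rewrite <- sumR_scal, <- sumR_minus, <- sumR_plus. apply sumR_ext; intros; ring. }
  assert (0 <= sumR m (fun k => r k * r k)) by (apply sumR_nonneg; intros; apply Rle_0_sqr).
  lra. Qed.

Lemma uvec_dot N m w : Omega N m w -> dotv (Dim N m) uvec w = 1.
Proof. intros [r [_ ->]]. rewrite dotv_state. unfold uvec at 1. simpl.
  rewrite sumR_zero. lra. intros. unfold uvec. pose proof (pow2_pos N). bsimp; try lia; lra. Qed.

Lemma Eloc_bounds N m e w : Eloc N m e -> Omega N m w ->
  0 <= dotv (Dim N m) e w /\ dotv (Dim N m) e w <= 2 * e O.
Proof. intros He Hw. pose proof Hw as Hw'. destruct Hw' as [r [Hr ->]]. split.
- apply (conv_ge vec vzero vadd vscal (fun v => dotv (Dim N m) v (stateOf N m r))) with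
   (P := fun v => v = vzero \/ v = uvec \/ exists r, normsq m r = 1 /\ v = vscal (/2) (stateOf N m r)); auto.
  apply dotv_vzero_l. intros; apply dotv_vadd_l. intros; apply dotv_vscal_l.
  intros x [->|[->|[r' [H1 ->]]]]. rewrite dotv_vzero_l; lra. rewrite uvec_dot; auto; lra.
  rewrite dotv_vscal_l, dotv_state, stateOf_0.
  rewrite (sumR_ext _ _ (fun k => r' k * r k)) by (intros; rewrite stateOf_hi; auto).
  pose proof (dot_bounds m r r' H1 Hr). lra.
- assert (0 <= 2 * e O - dotv (Dim N m) e (stateOf N m r)); [|lra].
  apply (conv_ge vec vzero vadd vscal (fun v => 2 * v O - dotv (Dim N m) v (stateOf N m r))) with
   (P := fun v => v = vzero \/ v = uvec \/ exists r, normsq m r = 1 /\ v = vscal (/2) (stateOf N m r)); auto.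
  rewrite dotv_vzero_l. unfold vzero; lra. intros; rewrite dotv_vadd_l; unfold vadd; lra.
  intros; rewrite dotv_vscal_l; unfold vscal; lra.
  intros x [->|[->|[r' [H1 ->]]]]. rewrite dotv_vzero_l; unfold vzero; lra. rewrite uvec_dot; auto; unfold uvec; simpl; lra.
  rewrite dotv_vscal_l, dotv_state. unfold vscal. rewrite stateOf_0.
  rewrite (sumR_ext _ _ (fun k => r' k * r k)) by (intros; rewrite stateOf_hi; auto).
  pose proof (dot_bounds m r r' H1 Hr). lra.
Qed.

Lemma Omega_zero N m : Omega N m (stateOf N m vzero).
Proof. exists vzero. split; auto. unfold normsq, vzero. rewrite sumR_zero. lra. intros; lra. Qed.

Lemma Eloc_0_nonneg N m e : Eloc N m e -> 0 <= e O.
Proof. intros He. destruct (Eloc_bounds N m e _ He (Omega_zero N m)) as [H _].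
  rewrite dotv_state in H. rewrite sumR_zero in H. lra. intros; unfold vzero; lra. Qed.

Lemma Eloc_mid N m e i : Eloc N m e -> (1 <= i < 2 ^ N)%nat -> e i = 0.
Proof. intros He Hi.
  eapply (conv_eq vec vzero vadd vscal (fun v => v i) eq_refl (fun _ _ => eq_refl) (fun _ _ => eq_refl) _ 0); [|exact He].
  intros x [->|[->|[r' [H1 ->]]]]; unfold vzero, uvec, vscal; auto. bsimp; auto; lia.
  rewrite stateOf_mid; auto. lra. Qed.

Lemma Phi_lxor_L N m a b Rm : mmul (Dim N m) (Tblock N m b Rm) (Phi N a) = Phi N (Nat.lxor b a).
Proof. extensionality i. extensionality j. unfold mmul.
  rewrite (sumR_ext _ _ (fun k => if (k =? j)%nat then (if (j <? 2^N)%nat then Tblock N m b Rm i j * dsign N a j else 0) else 0)).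
  2:{ intros k Hk. unfold Phi. bsimp; subst; try lia; lra. }
  rewrite sumR_delta. unfold Phi, Tblock, Dim. bsimp; subst; try lia; try lra. apply dsign_mul. Qed.

Lemma Phi_lxor_R N m a b Rm : mmul (Dim N m) (Phi N a) (trans (Tblock N m b Rm)) = Phi N (Nat.lxor a b).
Proof. extensionality i. extensionality j. unfold mmul, trans.
  rewrite (sumR_ext _ _ (fun k => if (k =? i)%nat then (if (i <? 2^N)%nat then dsign N a i * Tblock N m b Rm j i else 0) else 0)).
  2:{ intros k Hk. unfold Phi. bsimp; subst; try lia; lra. }
  rewrite sumR_delta. unfold Phi, Tblock, Dim. bsimp; subst; try lia; try lra. apply dsign_mul. Qed.

Lemma dotm_Phi_r N m X mu : dotm (Dim N m) X (Phi N mu) = sumR (2 ^ N) (fun i => X i i * dsign N mu i).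
Proof. unfold dotm, Dim. rewrite sumR_add_range. rewrite (sumR_zero m).
  2:{ intros. apply sumR_zero. intros. unfold Phi. bsimp; try lia; lra. }
  rewrite Rplus_0_r. apply sumR_ext. intros i Hi.
  rewrite (sumR_ext _ _ (fun j => if (j =? i)%nat then X i i * dsign N mu i else 0)).
  rewrite sumR_delta. bsimp; try lia; lra.
  intros j Hj. unfold Phi. bsimp; subst; try lia; lra. Qed.

Lemma dotm_Phi_l N m X mu : dotm (Dim N m) (Phi N mu) X = sumR (2 ^ N) (fun i => dsign N mu i * X i i).
Proof. unfold dotm, Dim. rewrite sumR_add_range. rewrite (sumR_zero m).
  2:{ intros. apply sumR_zero. intros. unfold Phi. bsimp; try lia; lra. }
  rewrite Rplus_0_r. apply sumR_ext. intros i Hi.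
  rewrite (sumR_ext _ _ (fun j => if (j =? i)%nat then dsign N mu i * X i i else 0)).
  rewrite sumR_delta. bsimp; try lia; lra.
  intros j Hj. unfold Phi. bsimp; subst; try lia; lra. Qed.

Lemma mmul_tens_l d T w w' : mmul d T (tens w w') = tens (mvec d T w) w'.
Proof. extensionality i. extensionality j. unfold mmul, tens, mvec. rewrite <- sumR_scal_r.
  apply sumR_ext; intros; lra. Qed.

Lemma mmul_tens_r d T w w' : mmul d (tens w w') (trans T) = tens w (mvec d T w').
Proof. extensionality i. extensionality j. unfold mmul, tens, mvec, trans. rewrite <- sumR_scal.
  apply sumR_ext; intros; lra. Qed.

Lemma mmul_madd d T A B : mmul d T (madd A B) = madd (mmul d T A) (mmul d T B).
Proof. extensionality i. extensionality j. unfold mmul, madd. rewrite <- sumR_plus. apply sumR_ext; intros; lra. Qed.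
Lemma mmul_mscal d T a A : mmul d T (mscal a A) = mscal a (mmul d T A).
Proof. extensionality i. extensionality j. unfold mmul, mscal. rewrite <- sumR_scal. apply sumR_ext; intros; lra. Qed.
Lemma mmul_mzero d T : mmul d T mzero = mzero.
Proof. extensionality i. extensionality j. unfold mmul, mzero. apply sumR_zero; intros; lra. Qed.
Lemma mmul_madd_r d T A B : mmul d (madd A B) T = madd (mmul d A T) (mmul d B T).
Proof. extensionality i. extensionality j. unfold mmul, madd. rewrite <- sumR_plus. apply sumR_ext; intros; lra. Qed.
Lemma mmul_mscal_r d T a A : mmul d (mscal a A) T = mscal a (mmul d A T).
Proof. extensionality i. extensionality j. unfold mmul, mscal. rewrite <- sumR_scal. apply sumR_ext; intros; lra. Qed.
Lemma mmul_mzero_r d T : mmul d mzero T = mzero.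
Proof. extensionality i. extensionality j. unfold mmul, mzero. apply sumR_zero; intros; lra. Qed.

Definition rot (m : nat) (Rm : mat) (r : vec) : vec := fun k => sumR m (fun j => Rm k j * r j).

Lemma mvec_Tblock N m mu Rm r :
  mvec (Dim N m) (Tblock N m mu Rm) (stateOf N m r) = stateOf N m (rot m Rm r).
Proof. extensionality i. unfold mvec, Dim. rewrite sumR_add_range.
  pose proof (pow2_pos N).
  destruct (Nat.lt_ge_cases i (2 ^ N)).
  - rewrite (sumR_zero m). 2:{ intros. unfold Tblock. bsimp; try lia; lra. }
    rewrite (sumR_ext _ _ (fun k => if (k =? i)%nat then (if (i =? 0)%nat then 1 else 0) else 0)).
    rewrite sumR_delta. unfold stateOf. bsimp; try lia; lra.
    intros k Hk. unfold Tblock. bsimp; subst; try lia; try lra.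
    rewrite dsign_0r, stateOf_0. lra. rewrite stateOf_mid by lia. lra.
  - rewrite (sumR_zero (2^N)). 2:{ intros. unfold Tblock. bsimp; try lia; lra. }
    destruct (Nat.lt_ge_cases i (2 ^ N + m)).
    + replace i with (2 ^ N + (i - 2^N))%nat by lia. rewrite stateOf_hi by lia.
      unfold rot. rewrite Rplus_0_l. apply sumR_ext. intros k Hk. unfold Tblock. rewrite stateOf_hi by lia.
      bsimp; try lia; replace (2 ^ N + (i - 2 ^ N) - 2 ^ N)%nat with (i - 2^N)%nat by lia; replace (2 ^ N + k - 2 ^ N)%nat with k by lia; lra.
    + rewrite sumR_zero. unfold stateOf. bsimp; try lia; lra. intros. unfold Tblock. bsimp; try lia; lra.
Qed.

Lemma sumR_prod n f g : sumR n f * sumR n g = sumR n (fun j => sumR n (fun l => f j * g l)).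
Proof. rewrite <- sumR_scal_r. apply sumR_ext. intros. rewrite <- sumR_scal. auto. Qed.

Lemma rot_normsq m Rm r : SO m Rm -> normsq m (rot m Rm r) = normsq m r.
Proof. intros [HO _]. unfold normsq, rot.
  rewrite (sumR_ext _ _ (fun k => sumR m (fun j => sumR m (fun l => (Rm k j * r j) * (Rm k l * r l))))) by (intros; apply sumR_prod).
  rewrite sumR_swap. apply sumR_ext. intros j Hj. rewrite sumR_swap.
  rewrite (sumR_ext _ _ (fun l => (r j * r l) * kdelta j l)).
  rewrite (sumR_ext _ _ (fun l => if (j =? l)%nat then r j * r l else 0)).
  rewrite sumR_delta'. bsimp; try lia; auto.
  intros; unfold kdelta; bsimp; lra.
  intros l Hl. rewrite <- HO by auto. rewrite <- sumR_scal. apply sumR_ext; intros; lra. Qed.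

Module DetBridge.
Import ssreflect ssrfun ssrbool eqtype ssrnat seq fintype bigop ssralg matrix Rstruct.
Import GRing.Theory.
Local Open Scope ring_scope.

Definition mxof (n : nat) (M : mat) : 'M[R]_n := \matrix_(i < n, j < n) M i j.

Lemma sumR_big n f : sumR n f = \sum_(i < n) f i.
Proof. elim: n => [|n IH] /=; first by rewrite big_ord0. by rewrite big_ord_recr /= IH. Qed.

Lemma det_bridge n M : det n M = \det (mxof n M).
Proof.
elim: n M => [|n IH] M.
  by rewrite det_mx00.
change (det n.+1 M) with (sumR n.+1 (fun j => (-1)^j * M O j * det n (minor j M)))%R.
rewrite (expand_det_row (mxof _ M) ord0) sumR_big.
apply: eq_bigr => j _. rewrite IH /cofactor mxE.
have -> : mxof n (minor j M) = row' ord0 (col' j (mxof n.+1 M)).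
  apply/matrixP => i k; rewrite !mxE /minor /=.
  congr (M _ _). rewrite /bump. case: (Nat.ltb_spec k j) => H.
  - have : (j <= k)%N = false. apply/negbTE. rewrite -ltnNge. by apply/ltP.
    by move=> ->.
  - have : (j <= k)%N = true. by apply/leP.
    by move=> ->.
have E : (-1)%R = (-1 : R). { by rewrite -RoppE. }
rewrite mulrA. congr (_ * _). rewrite RpowE add0n mulrC. by rewrite E. Qed.

Lemma orth_det_sq m Rm : (forall i j, Peano.lt i m -> Peano.lt j m -> sumR m (fun k => Rm k i * Rm k j)%R = kdelta i j) ->
  (det m Rm * det m Rm)%R = 1%R.
Proof.
move=> H. rewrite det_bridge.
have HT : (mxof m Rm)^T *m mxof m Rm = 1%:M.
  apply/matrixP => i j. rewrite !mxE.
  have -> : \sum_j0 (mxof m Rm)^T i j0 * mxof m Rm j0 j = sumR m (fun k => Rm k i * Rm k j)%R.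
    rewrite sumR_big. apply: eq_bigr => k _. by rewrite !mxE.
  rewrite H; [| by apply/ltP | by apply/ltP].
  rewrite /kdelta. case: (Nat.eqb_spec i j) => Hij.
  - have -> : i = j by apply: val_inj.
    by rewrite eqxx.
  - have -> : (i == j) = false. apply/negbTE. apply/negP => /eqP Hij'. by apply: Hij; rewrite Hij'.
    by [].
have := congr1 determinant HT. rewrite det_mulmx det_tr det1. by rewrite -RmultE.
Qed.

Lemma det_idmat m : det m (idmat m) = 1%R.
Proof.
rewrite det_bridge.
have -> : mxof m (idmat m) = 1%:M.
  apply/matrixP => i j. rewrite !mxE /idmat.
  have -> : Nat.ltb i m = true. apply Nat.ltb_lt. by apply/ltP.
  case: (Nat.eqb_spec i j) => Hij /=.
  - have -> : i = j by apply: val_inj.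
    by rewrite eqxx.
  - have -> : (i == j) = false. apply/negbTE. apply/negP => /eqP Hij'. by apply: Hij; rewrite Hij'.
    by [].
by rewrite det1.
Qed.
End DetBridge.

Lemma cont_sumR n (f : R -> nat -> R) : (forall j, continuity (fun t => f t j)) ->
  continuity (fun t => sumR n (f t)).
Proof. intros H. induction n; simpl.
  - apply continuity_const. intros x y; auto.
  - change (continuity (plus_fct (fun t => sumR n (f t)) (fun t => f t n))). apply continuity_plus; auto. Qed.

Lemma cont_det n (M : R -> mat) : (forall i j, continuity (fun t => M t i j)) ->
  continuity (fun t => det n (M t)).
Proof. revert M. induction n; intros M H.
  - apply continuity_const. intros x y; auto.
  - change (continuity (fun t => sumR (S n) (fun j => (-1)^j * M t O j * det n (minor j (M t))))).
    apply cont_sumR. intros j.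
    change (continuity (mult_fct (mult_fct (fun _ => (-1)^j) (fun t => M t O j)) (fun t => det n (minor j (M t))))).
    apply continuity_mult. apply continuity_mult. apply continuity_const. intros x y; auto. apply H.
    apply (IHn (fun t => minor j (M t))). intros i k. unfold minor. apply H. Qed.

Lemma sumR_idmat_l m i f : (i < m)%nat -> sumR m (fun k => idmat m k i * f k) = f i.
Proof. intros Hi. rewrite (sumR_ext _ _ (fun k => if (k =? i)%nat then f k else 0)).
  rewrite sumR_delta. bsimp; try lia; lra. intros; unfold idmat; bsimp; subst; try lia; lra. Qed.

Lemma sumR_idmat_r m i f : (i < m)%nat -> sumR m (fun k => f k * idmat m k i) = f i.
Proof. intros Hi. rewrite <- (sumR_idmat_l m i f Hi). apply sumR_ext; intros; lra. Qed.

Lemma quad_sum m (D1 D2 u v : vec) A B C E :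
  sumR m (fun k => (D1 k + A * u k + B * v k) * (D2 k + C * u k + E * v k)) =
  sumR m (fun k => D1 k * D2 k) + C * sumR m (fun k => D1 k * u k) + E * sumR m (fun k => D1 k * v k)
  + A * sumR m (fun k => u k * D2 k) + B * sumR m (fun k => v k * D2 k)
  + A * C * sumR m (fun k => u k * u k) + (A * E + B * C) * sumR m (fun k => u k * v k)
  + B * E * sumR m (fun k => v k * v k).
Proof. rewrite <- !sumR_scal, <- !sumR_plus. apply sumR_ext; intros; ring. Qed.

Section Rot.
Variables (m : nat) (u v : vec) (c : R).
Hypotheses (Hu : normsq m u = 1) (Hv : normsq m v = 1) (Huv : sumR m (fun k => u k * v k) = 0)
  (Hc : -1 <= c <= 1).

Definition th := acos c.
Lemma dummy_unused : True. Proof. exact I. Qed.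
Definition Rt (t : R) : mat := fun i j => idmat m i j +
  ((cos (t * th) - 1) * (u i * u j + v i * v j) + sin (t * th) * (v i * u j - u i * v j)).

Lemma Rt_orth t : forall i j, (i < m)%nat -> (j < m)%nat ->
  sumR m (fun k => Rt t k i * Rt t k j) = kdelta i j.
Proof. intros i j Hi Hj. set (a := cos (t * th) - 1). set (b := sin (t * th)).
  rewrite (sumR_ext m (fun k => Rt t k i * Rt t k j) (fun k => (idmat m k i + (a * u i - b * v i) * u k + (a * v i + b * u i) * v k) *
          (idmat m k j + (a * u j - b * v j) * u k + (a * v j + b * u j) * v k))).
  2:{ intros; unfold Rt; fold a b; ring. }
  rewrite quad_sum. rewrite !sumR_idmat_l, !sumR_idmat_r by auto.
  unfold normsq in Hu, Hv. rewrite Hu, Hv, Huv.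
  assert (Hab : a * a + b * b + 2 * a = 0).
  { unfold a, b. pose proof (sin2_cos2 (t * th)). unfold Rsqr in H. nra. }
  unfold kdelta, idmat. assert (K: forall L R, L - R = (a*a+b*b+2*a)*(u i*u j + v i*v j) -> L = R) by (intros L R HLR; rewrite Hab in HLR; lra). bsimp; try lia; apply K; ring.
Qed.

Lemma Rt_cont i j : continuity (fun t => Rt t i j).
Proof. unfold Rt. reg. Qed.

Lemma Rt_0 : Rt 0 = idmat m.
Proof. extensionality i. extensionality j. unfold Rt. rewrite Rmult_0_l, cos_0, sin_0. ring. Qed.

Lemma Rt_det t : 0 <= t -> det m (Rt t) = 1.
Proof. intros Ht.
  assert (Hsq : forall t, det m (Rt t) * det m (Rt t) = 1) by (intros; apply DetBridge.orth_det_sq; intros; apply Rt_orth; auto).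
  assert (H0 : det m (Rt 0) = 1) by (rewrite Rt_0; apply DetBridge.det_idmat).
  destruct (Req_dec (det m (Rt t)) 1) as [|Hne]; auto. exfalso.
  assert (Hm1 : det m (Rt t) = -1) by (specialize (Hsq t); nra).
  destruct (Req_dec t 0). subst. lra.
  destruct (IVT (fun s => - det m (Rt s)) 0 t) as [z [_ Hz]].
  - change (continuity (opp_fct (fun s => det m (Rt s)))). apply continuity_opp.
    apply cont_det. intros; apply Rt_cont.
  - lra.
  - simpl. lra.
  - simpl. lra.
  - specialize (Hsq z). nra.
Qed.

Lemma Rt_SO t : 0 <= t -> SO m (Rt t).
Proof. intros. split. intros; apply Rt_orth; auto. apply Rt_det; auto. Qed.

Lemma Rt_1_u k : (k < m)%nat -> rot m (Rt 1) u k = c * u k + sqrt (1 - c * c) * v k.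
Proof. intros Hk. unfold rot. set (s := sqrt (1 - c * c)).
  rewrite (sumR_ext _ _ (fun j => idmat m j k * u j + ((c - 1) * u k) * (u j * u j) + ((c-1) * v k) * (u j * v j)
     + (s * v k) * (u j * u j) - (s * u k) * (u j * v j))).
  2:{ intros j Hj. unfold Rt, th. rewrite Rmult_1_l, cos_acos, sin_acos by auto. unfold Rsqr. fold s.
      replace (idmat m k j) with (idmat m j k) by (unfold idmat; bsimp; subst; try lia; lra). ring. }
  rewrite sumR_minus, !sumR_plus, !sumR_scal, sumR_idmat_l by auto.
  unfold normsq in Hu. rewrite Hu, Huv. ring. Qed.
End Rot.

Lemma sumR_sq_zero m f : sumR m (fun k => f k * f k) = 0 -> forall k, (k < m)%nat -> f k = 0.
Proof. intros H k Hk.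
  assert (f k * f k <= sumR m (fun k => f k * f k)) by (apply (sumR_term_le m (fun k => f k * f k)); auto; intros; apply Rle_0_sqr).
  nra. Qed.

Lemma gs m p q : normsq m p = 1 -> normsq m q = 1 ->
  let c := sumR m (fun k => p k * q k) in c * c < 1 ->
  let v := fun k => (q k - c * p k) / sqrt (1 - c * c) in
  normsq m v = 1 /\ sumR m (fun k => p k * v k) = 0 /\ (forall k, q k = c * p k + sqrt (1 - c * c) * v k).
Proof. intros Hp Hq c Hc v. unfold normsq in *.
  assert (Hs : 0 < sqrt (1 - c * c)) by (apply sqrt_lt_R0; lra).
  assert (Hs2 : sqrt (1 - c * c) * sqrt (1 - c * c) = 1 - c * c) by (apply sqrt_sqrt; lra).
  split; [|split].
  - unfold v. rewrite (sumR_ext _ _ (fun k => / (1 - c*c) * (q k * q k - 2 * c * (p k * q k) + c * c * (p k * p k)))).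
    2:{ intros. unfold Rdiv. replace (/ (1 - c*c)) with (/ sqrt (1-c*c) * / sqrt (1-c*c)) by (rewrite <- Rinv_mult, Hs2; auto). ring. }
    rewrite sumR_scal, sumR_plus, sumR_minus, !sumR_scal. fold c. rewrite Hp, Hq. field. lra.
  - unfold v. rewrite (sumR_ext _ _ (fun k => / sqrt (1 - c*c) * (p k * q k - c * (p k * p k)))).
    2:{ intros. unfold Rdiv. ring. }
    rewrite sumR_scal, sumR_minus, sumR_scal. fold c. rewrite Hp. ring.
  - intros k. unfold v. field. lra.
Qed.

Lemma stateOf_ext N m r r' : (forall k, (k < m)%nat -> r k = r' k) -> stateOf N m r = stateOf N m r'.
Proof. intros H. extensionality i. unfold stateOf. bsimp; auto. apply H. lia. Qed.

Lemma stateOf_inj N m r r' : stateOf N m r = stateOf N m r' -> forall k, (k < m)%nat -> r k = r' k.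
Proof. intros H k Hk. rewrite <- (stateOf_hi N m r k Hk), <- (stateOf_hi N m r' k Hk), H. auto. Qed.

Lemma path_exists m r r' : (2 <= m)%nat -> normsq m r = 1 -> normsq m r' = 1 ->
  exists Rt : R -> mat,
    (forall t, 0 <= t <= 1 -> SO m (Rt t)) /\
    (forall i j, continuity (fun t => Rt t i j)) /\
    Rt 0 = idmat m /\ (forall k, (k < m)%nat -> rot m (Rt 1) r k = r' k).
Proof. intros Hm Hr Hr'.
  set (c := sumR m (fun k => r k * r' k)).
  assert (Hc : -1 <= c <= 1) by (apply dot_bounds; auto; lra).
  destruct (Rlt_dec (c * c) 1) as [Hlt|Hge].
  - destruct (gs m r r' Hr Hr' Hlt) as [Hv [Hrv Hdec]].
    set (v := fun k => (r' k - c * r k) / sqrt (1 - c * c)) in *.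
    exists (Rt m r v c). split; [|split; [|split]].
    + intros t Ht. apply Rt_SO; auto; lra.
    + intros; apply Rt_cont.
    + apply Rt_0.
    + intros k Hk. rewrite Rt_1_u by auto. rewrite Hdec. auto.
  - assert (Hc2 : c * c = 1) by nra.
    assert (Hpar : forall k, (k < m)%nat -> r' k = c * r k).
    { intros k Hk. apply Rminus_diag_uniq. apply (sumR_sq_zero m (fun k => r' k - c * r k)); auto.
      unfold normsq in *. rewrite (sumR_ext _ _ (fun k => r' k * r' k - 2 * c * (r k * r' k) + c * c * (r k * r k))) by (intros; ring).
      rewrite sumR_plus, sumR_minus, !sumR_scal. fold c. rewrite Hr, Hr'. nra. }
    assert (Hsm : r O * r O + r 1%nat * r 1%nat <= 1).
    { rewrite <- Hr. unfold normsq. replace m with (2 + (m - 2))%nat by lia. rewrite sumR_add_range.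
      assert (0 <= sumR (m - 2) (fun k => r (2 + k)%nat * r (2 + k)%nat)) by (apply sumR_nonneg; intros; apply Rle_0_sqr).
      change (sumR 2 (fun i => r i * r i)) with (0 + r O * r O + r 1%nat * r 1%nat). lra. }
    assert (Hi0 : exists i0, (i0 < m)%nat /\ r i0 * r i0 <= / 2).
    { destruct (Rle_dec (r O * r O) (/2)). exists O; split; auto; lia. exists 1%nat; split; [lia|lra]. }
    destruct Hi0 as [i0 [Hi0 Hri0]].
    set (e := fun k => if (k =? i0)%nat then 1 else 0).
    assert (He : normsq m e = 1).
    { unfold normsq, e. rewrite (sumR_ext _ _ (fun k => if (k =? i0)%nat then 1 else 0)) by (intros; bsimp; lra).
      rewrite sumR_delta. bsimp; lia || lra. }
    assert (Hre : sumR m (fun k => r k * e k) = r i0).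
    { unfold e. rewrite (sumR_ext _ _ (fun k => if (k =? i0)%nat then r k else 0)) by (intros; bsimp; lra).
      rewrite sumR_delta. bsimp; lia || lra. }
    assert (Hlt : sumR m (fun k => r k * e k) * sumR m (fun k => r k * e k) < 1) by (rewrite Hre; lra).
    destruct (gs m r e Hr He Hlt) as [Hv [Hrv _]].
    set (v := fun k => (e k - sumR m (fun k0 => r k0 * e k0) * r k) / sqrt (1 - sumR m (fun k0 => r k0 * e k0) * sumR m (fun k0 => r k0 * e k0))) in *.
    exists (Rt m r v c). split; [|split; [|split]].
    + intros t Ht. apply Rt_SO; auto; lra.
    + intros; apply Rt_cont.
    + apply Rt_0.
    + intros k Hk. rewrite Rt_1_u by auto. rewrite Hpar by auto. rewrite Hc2. replace (1 - 1) with 0 by ring.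
      rewrite sqrt_0. ring.
Qed.

Lemma stateOf_comb N m p a b :
  vadd (vscal p (stateOf N m a)) (vscal (1 - p) (stateOf N m b)) = stateOf N m (fun k => p * a k + (1 - p) * b k).
Proof. extensionality i. unfold vadd, vscal, stateOf. bsimp; ring. Qed.

Lemma pure_unit N m w : (1 <= m)%nat -> pure N m w -> exists r, normsq m r = 1 /\ w = stateOf N m r.
Proof. intros Hm [[r [Hr ->]] Hext]. exists r. split; auto.
  destruct (Req_dec (normsq m r) 1); auto. exfalso.
  set (rho := sqrt (normsq m r)).
  assert (Hn0 : 0 <= normsq m r) by (apply sumR_nonneg; intros; apply Rle_0_sqr).
  assert (Hrho : rho * rho = normsq m r) by (apply sqrt_sqrt; auto).
  assert (Hrho0 : 0 <= rho) by apply sqrt_pos.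
  assert (Hrho1 : rho < 1) by nra.
  assert (Hd : exists d, normsq m d = 1 /\ forall k, (k < m)%nat -> r k = rho * d k).
  { destruct (Req_dec rho 0) as [Hz|Hnz].
    - exists (fun k => if (k =? 0)%nat then 1 else 0). split.
      + unfold normsq. rewrite (sumR_ext _ _ (fun k => if (k =? 0)%nat then 1 else 0)) by (intros; bsimp; lra).
        rewrite sumR_delta. bsimp; lia || lra.
      + intros k Hk. rewrite Hz. rewrite Hz in Hrho. rewrite Rmult_0_l. apply (sumR_sq_zero m r); auto. unfold normsq in Hrho. lra.
    - exists (fun k => r k / rho). split.
      + unfold normsq. rewrite (sumR_ext _ _ (fun k => / (rho * rho) * (r k * r k))) by (intros; field; auto).
        rewrite sumR_scal. unfold normsq in Hrho. rewrite Hrho. field. unfold normsq in H. rewrite <- Hrho. nra.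
      + intros; field; auto. }
  destruct Hd as [d [Hd1 Hd2]].
  set (p := (1 + rho) / 2).
  assert (Hmd : normsq m (fun k => - d k) = 1) by (unfold normsq in *; rewrite <- Hd1; apply sumR_ext; intros; ring).
  destruct (Hext (stateOf N m d) (stateOf N m (fun k => - d k)) p) as [E1 _].
  - unfold p; lra.
  - exists d; split; auto; lra.
  - exists (fun k => - d k); split; auto; lra.
  - rewrite stateOf_comb. apply stateOf_ext. intros k Hk. rewrite Hd2 by auto. unfold p. field.
  - assert (normsq m d = normsq m r) by (apply sumR_ext; intros; rewrite (stateOf_inj N m d r E1); auto).
    lra.
Qed.

Lemma SO_idmat m : SO m (idmat m).
Proof. split. intros i j Hi Hj. rewrite sumR_idmat_l by auto. unfold idmat, kdelta. bsimp; try lia; lra.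
  apply DetBridge.det_idmat. Qed.

Lemma Lambda_iff N m phi : Lambda N m phi <-> exists mu, (mu < 2 ^ N)%nat /\ phi = Phi N mu.
Proof. split.
  - intros [T [T' [[mu [Rm [Hmu [_ ->]]]] [[mu' [Rm' [Hmu' [_ ->]]]] ->]]]].
    exists (Nat.lxor mu mu'). split. apply lxor_lt; auto.
    rewrite Phi_lxor_L, Nat.lxor_0_r, Phi_lxor_R. auto.
  - intros [mu [Hmu ->]]. exists (Tblock N m mu (idmat m)), (Tblock N m 0 (idmat m)).
    split; [|split]. exists mu, (idmat m). split; auto. split; auto. apply SO_idmat.
    exists O, (idmat m). split. apply pow2_pos. split; auto. apply SO_idmat.
    rewrite Phi_lxor_L, Nat.lxor_0_r, Phi_lxor_R, Nat.lxor_0_r. auto.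
Qed.

Lemma uvec_Eloc N m : Eloc N m uvec.
Proof. apply convv_single. auto. Qed.

Lemma dotm_tens_Phi N m e f mu : Eloc N m e -> Eloc N m f ->
  dotm (Dim N m) (tens e f) (Phi N mu) = e O * f O.
Proof. intros He Hf. rewrite dotm_Phi_r. rewrite sumR_first. unfold tens. rewrite dsign_0r. ring.
  apply pow2_ge1. intros i Hi. unfold tens. rewrite (Eloc_mid N m e i) by auto. ring. Qed.

Lemma OmegaAB_conv_ge N m (g : mat -> R) lo :
  g mzero = 0 -> (forall x y, g (madd x y) = g x + g y) -> (forall a x, g (mscal a x) = a * g x) ->
  (forall w w', Omega N m w -> Omega N m w' -> lo <= g (tens w w')) ->
  (forall mu, (mu < 2 ^ N)%nat -> lo <= g (Phi N mu)) ->
  forall phi, OmegaAB N m phi -> lo <= g phi.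
Proof. intros g0 gadd gsc Hp HL.
  apply (conv_ge mat mzero madd mscal g g0 gadd gsc). intros x [Hx|Hx].
  - revert x Hx. apply (conv_ge mat mzero madd mscal g g0 gadd gsc). intros x [w [w' [Hw [Hw' ->]]]]. auto.
  - apply Lambda_iff in Hx. destruct Hx as [mu [Hmu ->]]. auto. Qed.

Lemma OmegaAB_conv_le N m (g : mat -> R) hi :
  g mzero = 0 -> (forall x y, g (madd x y) = g x + g y) -> (forall a x, g (mscal a x) = a * g x) ->
  (forall w w', Omega N m w -> Omega N m w' -> g (tens w w') <= hi) ->
  (forall mu, (mu < 2 ^ N)%nat -> g (Phi N mu) <= hi) ->
  forall phi, OmegaAB N m phi -> g phi <= hi.
Proof. intros g0 gadd gsc Hp HL.
  apply (conv_le mat mzero madd mscal g g0 gadd gsc). intros x [Hx|Hx].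
  - revert x Hx. apply (conv_le mat mzero madd mscal g g0 gadd gsc). intros x [w [w' [Hw [Hw' ->]]]]. auto.
  - apply Lambda_iff in Hx. destruct Hx as [mu [Hmu ->]]. auto. Qed.

Lemma partA3 N m phi : OmegaAB N m phi -> OmegaMax N m phi.
Proof. intros H. split.
  - apply Rle_antisym.
    + revert phi H. apply OmegaAB_conv_le. apply dotm_mzero. intros; apply dotm_madd. intros; apply dotm_mscal.
      intros. rewrite dotm_tens, !uvec_dot by auto. lra.
      intros. rewrite (dotm_tens_Phi N m) by apply uvec_Eloc. unfold uvec; simpl. lra.
    + revert phi H. apply OmegaAB_conv_ge. apply dotm_mzero. intros; apply dotm_madd. intros; apply dotm_mscal.
      intros. rewrite dotm_tens, !uvec_dot by auto. lra.
      intros. rewrite (dotm_tens_Phi N m) by apply uvec_Eloc. unfold uvec; simpl. lra.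
  - intros e f He Hf. revert phi H. apply OmegaAB_conv_ge. apply dotm_mzero. intros; apply dotm_madd. intros; apply dotm_mscal.
    intros. rewrite dotm_tens. apply Rmult_le_pos; apply Eloc_bounds; auto.
    intros. rewrite (dotm_tens_Phi N m) by auto. apply Rmult_le_pos; apply (Eloc_0_nonneg N m); auto.
Qed.

Lemma inT_Omega N m T w : inT N m T -> Omega N m w -> Omega N m (mvec (Dim N m) T w).
Proof. intros [mu [Rm [_ [HR ->]]]] [r [Hr ->]]. rewrite mvec_Tblock. exists (rot m Rm r). split; auto.
  rewrite rot_normsq; auto. Qed.

Lemma inT_AB_l N m T phi : inT N m T -> OmegaAB N m phi -> OmegaAB N m (mmul (Dim N m) T phi).
Proof. intros HT. apply (conv_map mzero madd mscal mzero madd mscal (mmul (Dim N m) T)).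
  apply mmul_mzero. intros; apply mmul_madd. intros; apply mmul_mscal.
  intros x [Hx|Hx].
  - left. revert x Hx. apply (conv_map mzero madd mscal mzero madd mscal (mmul (Dim N m) T)).
    apply mmul_mzero. intros; apply mmul_madd. intros; apply mmul_mscal.
    intros x [w [w' [Hw [Hw' ->]]]]. rewrite mmul_tens_l. exists (mvec (Dim N m) T w), w'.
    split; auto. apply inT_Omega; auto.
  - right. apply Lambda_iff in Hx. destruct Hx as [mu [Hmu ->]]. destruct HT as [b [Rm [Hb [_ ->]]]].
    rewrite Phi_lxor_L. apply Lambda_iff. exists (Nat.lxor b mu). split; auto. apply lxor_lt; auto.
Qed.

Lemma inT_AB_r N m T phi : inT N m T -> OmegaAB N m phi -> OmegaAB N m (mmul (Dim N m) phi (trans T)).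
Proof. intros HT. apply (conv_map mzero madd mscal mzero madd mscal (fun phi => mmul (Dim N m) phi (trans T))).
  apply mmul_mzero_r. intros; apply mmul_madd_r. intros; apply mmul_mscal_r.
  intros x [Hx|Hx].
  - left. revert x Hx. apply (conv_map mzero madd mscal mzero madd mscal (fun phi => mmul (Dim N m) phi (trans T))).
    apply mmul_mzero_r. intros; apply mmul_madd_r. intros; apply mmul_mscal_r.
    intros x [w [w' [Hw [Hw' ->]]]]. rewrite mmul_tens_r. exists w, (mvec (Dim N m) T w').
    split; auto. split; auto. apply inT_Omega; auto.
  - right. apply Lambda_iff in Hx. destruct Hx as [mu [Hmu ->]]. destruct HT as [b [Rm [Hb [_ ->]]]].
    rewrite Phi_lxor_R. apply Lambda_iff. exists (Nat.lxor mu b). split; auto. apply lxor_lt; auto.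
Qed.

Lemma partB2 N m w w' : (2 <= m)%nat -> pure N m w -> pure N m w' ->
      exists Rt : R -> mat,
        (forall t, 0 <= t <= 1 -> SO m (Rt t)) /\
        (forall i j, continuity (fun t => Rt t i j)) /\
        Rt 0 = idmat m /\
        mvec (Dim N m) (Tblock N m 0 (Rt 1)) w = w'.
Proof. intros Hm Hw Hw'. destruct (pure_unit N m w ltac:(lia) Hw) as [r [Hr ->]].
  destruct (pure_unit N m w' ltac:(lia) Hw') as [r' [Hr' ->]].
  destruct (path_exists m r r' Hm Hr Hr') as [Rt [H1 [H2 [H3 H4]]]].
  exists Rt. split; [|split; [|split]]; auto. rewrite mvec_Tblock. apply stateOf_ext. auto. Qed.

Lemma partC2 N mu mu' : (mu < 2 ^ N)%nat -> (mu' < 2 ^ N)%nat -> mu <> mu' -> Phi N mu <> Phi N mu'.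
Proof. intros H1 H2 H3 E. destruct (dsign_distinct N mu mu' H1 H2 H3) as [i [Hi Hne]].
  apply Hne. assert (Phi N mu i i = Phi N mu' i i) by (rewrite E; auto).
  unfold Phi in H. destruct (Nat.ltb_spec i (2^N)); try lia. rewrite Nat.eqb_refl in H. simpl in H. auto. Qed.

Lemma INR_pow2 N : INR (2 ^ N) = 2 ^ N.
Proof. rewrite pow_INR. simpl. replace (1 + 1) with 2 by ring. auto. Qed.

Lemma pow2_R_ge1 N : 1 <= 2 ^ N.
Proof. rewrite <- INR_pow2. apply (le_INR 1). apply pow2_ge1. Qed.

Lemma Feff_prod N m y w w' : Omega N m w -> Omega N m w' -> dotm (Dim N m) (Feff N y) (tens w w') = / 2 ^ N.
Proof. intros [r [_ ->]] [r' [_ ->]]. unfold Feff. rewrite dotm_mscal_l, dotm_Phi_l, sumR_first.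
  unfold tens. rewrite dsign_0r, !stateOf_0. ring. apply pow2_ge1.
  intros i Hi. unfold tens. rewrite stateOf_mid by auto. ring. Qed.

Lemma Feff_Phi N y mu : (y < 2 ^ N)%nat -> (mu < 2 ^ N)%nat -> forall m,
  dotm (Dim N m) (Feff N y) (Phi N mu) = kdelta y mu.
Proof. intros Hy Hmu m. unfold Feff. rewrite dotm_mscal_l, dotm_Phi_l.
  rewrite (sumR_ext _ _ (fun i => dsign N y i * dsign N mu i)).
  2:{ intros i Hi. unfold Phi. rewrite Nat.eqb_refl. bsimp; try lia; auto. }
  rewrite char_orth by auto. unfold kdelta. rewrite INR_pow2. pose proof (pow2_R_ge1 N).
  destruct (y =? mu)%nat. field. lra. ring. Qed.

Lemma partD1 N m y : (y < 2 ^ N)%nat -> EAB N m (Feff N y).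
Proof. intros Hy phi H. pose proof (pow2_R_ge1 N).
  assert (0 < / 2 ^ N <= 1). { split. apply Rinv_0_lt_compat; lra. rewrite <- Rinv_1. apply Rinv_le_contravar; lra. }
  split.
  - revert phi H. apply OmegaAB_conv_ge. apply dotm_mzero. intros; apply dotm_madd. intros; apply dotm_mscal.
    intros. rewrite Feff_prod by auto. lra.
    intros. rewrite Feff_Phi by auto. unfold kdelta. destruct (_ =? _)%nat; lra.
  - revert phi H. apply OmegaAB_conv_le. apply dotm_mzero. intros; apply dotm_madd. intros; apply dotm_mscal.
    intros. rewrite Feff_prod by auto. lra.
    intros. rewrite Feff_Phi by auto. unfold kdelta. destruct (_ =? _)%nat; lra.
Qed.

Lemma partD2 N : (fun i j => sumR (2 ^ N) (fun y => Feff N y i j)) = tens uvec uvec.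
Proof. extensionality i. extensionality j. unfold Feff, mscal. rewrite sumR_scal. unfold Phi.
  pose proof (pow2_R_ge1 N).
  destruct (Nat.ltb_spec i (2^N)); destruct (Nat.eqb_spec i j); simpl.
  - subst. rewrite sum_dsign_col by auto. unfold tens, uvec. rewrite INR_pow2. destruct (j =? 0)%nat. field. lra. ring.
  - rewrite sumR_zero by (intros; lra). unfold tens, uvec. bsimp; subst; try lia; ring.
  - rewrite sumR_zero by (intros; lra). unfold tens, uvec. pose proof (pow2_pos N). bsimp; subst; try lia; ring.
  - rewrite sumR_zero by (intros; lra). unfold tens, uvec. pose proof (pow2_pos N). bsimp; subst; try lia; ring.
Qed.

Lemma partD3 N m Rm x y : (x < 2 ^ N)%nat -> (y < 2 ^ N)%nat ->
  dotm (Dim N m) (Feff N y) (mmul (Dim N m) (Tblock N m x Rm) (Phi N 0)) = dotm (Dim N m) (Feff N y) (Phi N x) /\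
  dotm (Dim N m) (Feff N y) (Phi N x) = kdelta y x.
Proof. intros Hx Hy. rewrite Phi_lxor_L, Nat.lxor_0_r. split; auto. apply Feff_Phi; auto. Qed.

Lemma mi_ext nx ny px pyx pyx' : (forall x y, (x < nx)%nat -> (y < ny)%nat -> pyx x y = pyx' x y) ->
  mutual_info nx ny px pyx = mutual_info nx ny px pyx'.
Proof. intros H. unfold mutual_info. cbv zeta. apply sumR_ext. intros x Hx. apply sumR_ext. intros y Hy.
  rewrite (sumR_ext nx (fun x0 => px x0 * pyx x0 y) (fun x0 => px x0 * pyx' x0 y)) by (intros; rewrite H; auto).
  rewrite H by auto. auto. Qed.

Lemma ln2_pos : 0 < ln 2.
Proof. pose proof ln_lt_2. lra. Qed.

Lemma mi_uniform K c : (1 <= K)%nat -> c = INR K ->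
  mutual_info K K (fun _ => / c) (fun x y => kdelta y x) = log2 (INR K).
Proof. intros HK Hc. subst c. assert (HK' : 1 <= INR K) by (apply (le_INR 1); auto).
  unfold mutual_info. cbv zeta.
  rewrite (sumR_ext K _ (fun x => / INR K * log2 (INR K))).
  - rewrite sumR_const. field. lra.
  - intros x Hx. rewrite (sumR_ext K _ (fun y => if (y =? x)%nat then / INR K * log2 (INR K) else 0)).
    + rewrite sumR_delta. bsimp; try lia; auto.
    + intros y Hy. rewrite (sumR_ext K (fun x0 => / INR K * kdelta y x0) (fun x0 => if (y =? x0)%nat then / INR K else 0)).
      2:{ intros; unfold kdelta; destruct (y =? _)%nat; ring. }
      rewrite sumR_delta'. unfold kdelta. destruct (Nat.eqb_spec y x); destruct (Nat.ltb_spec y K); try lia.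
      * destruct (Req_EM_T (/ INR K * 1) 0). exfalso. assert (0 < / INR K) by (apply Rinv_0_lt_compat; lra). lra.
        f_equal. lra. f_equal. field. lra.
      * destruct (Req_EM_T (/ INR K * 0) 0); auto. exfalso; apply n0; ring.
Qed.

Lemma log2_pow2 N : log2 (2 ^ N) = INR N.
Proof. unfold log2. rewrite ln_pow by lra. field. pose proof ln2_pos. lra. Qed.

Lemma partD4 N m Rm : SO m Rm ->
      mutual_info (2 ^ N) (2 ^ N) (fun _ => / 2 ^ N)
        (fun x y => dotm (Dim N m) (Feff N y) (mmul (Dim N m) (Tblock N m x Rm) (Phi N 0)))
      = INR N.
Proof. intros _. rewrite (mi_ext _ _ _ _ (fun x y => kdelta y x)).
  - rewrite mi_uniform. rewrite INR_pow2. apply log2_pow2. apply pow2_ge1. symmetry. apply INR_pow2.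
  - intros x y Hx Hy. destruct (partD3 N m Rm x y Hx Hy) as [A B]. rewrite A, B. auto.
Qed.

Lemma ln_le' x y : 0 < x -> x <= y -> ln x <= ln y.
Proof. intros. destruct (Req_dec x y). subst; lra. left. apply ln_increasing; lra. Qed.

Lemma ln_le_sub1 z : 0 < z -> ln z <= z - 1.
Proof. intros. pose proof (exp_ineq1_le (ln z)). rewrite exp_ln in H0 by auto. lra. Qed.

Lemma term_bound px P a Py :
  0 <= px -> 0 <= P -> P <= 2 * a -> px * P <= Py ->
  (if Req_EM_T (px * P) 0 then 0 else px * P * log2 (P / Py)) <=
  px * P + px * P * (a / Py - 1) / ln 2.
Proof. intros H1 H2 H3 H4. pose proof ln2_pos.
  destruct (Req_EM_T (px * P) 0) as [E|E].
  - rewrite E. unfold Rdiv. lra.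
  - assert (Hp : 0 < px * P) by (assert (0 <= px * P) by (apply Rmult_le_pos; auto); lra).
    assert (HP : 0 < P) by (destruct H2; auto; subst; lra).
    assert (Ha : 0 < a) by lra. assert (HPy : 0 < Py) by lra.
    unfold log2. replace (P / Py) with ((P / a) * (a / Py)) by (field; lra).
    rewrite ln_mult by (apply Rdiv_lt_0_compat; lra).
    assert (ln (P / a) <= ln 2) by (apply ln_le'; [apply Rdiv_lt_0_compat; lra| apply Rmult_le_reg_r with a; auto; unfold Rdiv; rewrite Rmult_assoc, Rinv_l; lra]).
    assert (ln (a / Py) <= a / Py - 1) by (apply ln_le_sub1; apply Rdiv_lt_0_compat; lra).
    apply Rmult_le_reg_r with (ln 2); auto.
    replace ((px * P + px * P * (a / Py - 1) / ln 2) * ln 2) with (px * P * (ln 2 + (a / Py - 1))) by (field; lra).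
    replace (px * P * ((ln (P / a) + ln (a / Py)) / ln 2) * ln 2) with (px * P * (ln (P / a) + ln (a / Py))) by (field; lra).
    apply Rmult_le_compat_l; lra.
Qed.

Lemma cap_upper N m I : cap_achievable N m I -> I <= 1.
Proof. intros [nx [ny [px [om [e [Hpx [Hsum [Hom [He [Hu ->]]]]]]]]]].
  set (P := fun x y => dotv (Dim N m) (e y) (om x)).
  set (a := fun y => e y O).
  set (Py := fun y => sumR nx (fun x => px x * P x y)).
  assert (HPb : forall x y, (x < nx)%nat -> (y < ny)%nat -> 0 <= P x y /\ P x y <= 2 * a y).
  { intros. apply Eloc_bounds; auto. }
  assert (Ha : sumR ny a = 1). { unfold a. pose proof (equal_f Hu O). simpl in H. rewrite H. reflexivity. }
  assert (Ha0 : forall y, (y < ny)%nat -> 0 <= a y) by (intros; apply (Eloc_0_nonneg N m); auto).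
  assert (HPs : forall x, (x < nx)%nat -> sumR ny (P x) = 1).
  { intros x Hx. unfold P, dotv. rewrite sumR_swap. rewrite (sumR_ext _ _ (fun i => uvec i * om x i)).
    apply uvec_dot; auto. intros i Hi. rewrite sumR_scal_r. rewrite (equal_f Hu i). auto. }
  assert (HPy : sumR ny Py = 1).
  { unfold Py. rewrite sumR_swap. rewrite (sumR_ext _ _ (fun x => px x * 1)). rewrite (sumR_ext _ _ px) by (intros; ring). auto.
    intros x Hx. rewrite sumR_scal. rewrite HPs; auto. }
  pose proof ln2_pos.
  unfold mutual_info. cbv zeta. fold P.
  apply Rle_trans with (sumR nx (fun x => sumR ny (fun y => px x * P x y + px x * P x y * (a y / Py y - 1) / ln 2))).
  - apply sumR_le. intros x Hx. apply sumR_le. intros y Hy. fold (Py y). apply term_bound; auto.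
    apply HPb; auto. apply HPb; auto.
    unfold Py. apply (sumR_term_le nx (fun x => px x * P x y)); auto.
    intros; apply Rmult_le_pos; auto; apply HPb; auto.
  - rewrite (sumR_ext _ _ (fun x => sumR ny (fun y => px x * P x y) + sumR ny (fun y => px x * P x y * (a y / Py y - 1) / ln 2)))
      by (intros; apply sumR_plus).
    rewrite sumR_plus.
    rewrite (sumR_ext nx (fun x => sumR ny (fun y => px x * P x y)) (fun x => px x)).
    2:{ intros. rewrite sumR_scal, HPs; auto; ring. }
    change (sumR nx (fun x => px x)) with (sumR nx px). rewrite Hsum. rewrite sumR_swap.
    assert (sumR ny (fun y => sumR nx (fun x => px x * P x y * (a y / Py y - 1) / ln 2)) <= 0); [|lra].
    apply Rle_trans with (sumR ny (fun y => (a y - Py y) / ln 2)).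
    + apply sumR_le. intros y Hy.
      rewrite (sumR_ext _ _ (fun x => px x * P x y * ((a y / Py y - 1) / ln 2))) by (intros; unfold Rdiv; ring).
      rewrite sumR_scal_r. fold (Py y). unfold Rdiv.
      apply Rmult_le_reg_r with (ln 2); auto. rewrite !Rmult_assoc, Rinv_l by lra. rewrite !Rmult_1_r.
      destruct (Req_dec (Py y) 0) as [E|E].
      * rewrite E. pose proof (Ha0 y Hy). lra.
      * replace (Py y * (a y * / Py y - 1)) with (a y - Py y) by (field; auto). lra.
    + unfold Rdiv. rewrite sumR_scal_r, sumR_minus, Ha, HPy. lra.
Qed.

Definition e0v : vec := fun k => if (k =? 0)%nat then 1 else 0.
Definition sgv (x : nat) : vec := fun k => (if (x =? 0)%nat then 1 else -1) * e0v k.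

Lemma normsq_sgv m x : (1 <= m)%nat -> normsq m (sgv x) = 1.
Proof. intros Hm. unfold normsq, sgv, e0v.
  rewrite (sumR_ext _ _ (fun k => if (k =? 0)%nat then 1 else 0)) by (intros; bsimp; lra).
  rewrite sumR_delta. bsimp; lia || lra. Qed.

Lemma cap_achieve N m : (1 <= m)%nat -> cap_achievable N m 1.
Proof. intros Hm. exists 2%nat, 2%nat, (fun _ => / 2), (fun x => stateOf N m (sgv x)),
  (fun y => vscal (/2) (stateOf N m (sgv y))).
  split; [|split; [|split; [|split; [|split]]]].
  - intros; lra.
  - simpl. lra.
  - intros x _. exists (sgv x). split; auto. rewrite normsq_sgv; auto; lra.
  - intros y _. apply convv_single. right; right. exists (sgv y). split; auto. apply normsq_sgv; auto.
  - extensionality i. simpl. unfold vscal, stateOf, uvec, sgv, e0v. bsimp; try lia; lra.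
  - symmetry. rewrite (mi_ext _ _ _ _ (fun x y => kdelta y x)).
    + rewrite (mi_uniform 2 2); auto. unfold log2. simpl. replace (1+1) with 2 by ring. field. pose proof ln2_pos; lra.
    + intros x y Hx Hy. rewrite dotv_vscal_l, dotv_state. rewrite stateOf_0.
      rewrite (sumR_ext _ _ (fun k => if (k =? 0)%nat then (if (y =? 0)%nat then 1 else -1) * (if (x =? 0)%nat then 1 else -1) else 0)).
      2:{ intros k Hk. rewrite stateOf_hi by auto. unfold sgv, e0v. bsimp; lra. }
      rewrite sumR_delta. unfold kdelta. bsimp; try lia; try lra.
      all: destruct x as [|[|x]]; destruct y as [|[|y]]; simpl in *; try lia; lra.
Qed.

Lemma partD5 N m : (1 <= m)%nat -> capacity_is N m 1.
Proof. intros Hm. split.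
  - intros I HI. apply (cap_upper N m); auto.
  - intros b Hb. apply Hb. apply cap_achieve; auto. Qed.

Theorem mainTheorem14 (N m : nat) (HN : (2 <= N)%nat) (Hm : (1 <= m)%nat) :
  (* (a) *)
  ((forall phi, Lambda N m phi <-> exists mu, (mu < 2 ^ N)%nat /\ phi = Phi N mu) /\
   (forall phi, OmegaMin N m phi -> OmegaAB N m phi) /\
   (forall phi, OmegaAB N m phi -> OmegaMax N m phi)) /\
  (* (b) *)
  ((forall T, inT N m T ->
      (forall w, Omega N m w -> Omega N m (mvec (Dim N m) T w)) /\
      (forall phi, OmegaAB N m phi -> OmegaAB N m (mmul (Dim N m) T phi)) /\
      (forall phi, OmegaAB N m phi -> OmegaAB N m (mmul (Dim N m) phi (trans T)))) /\
   ((2 <= m)%nat ->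
    forall w w', pure N m w -> pure N m w' ->
      exists Rt : R -> mat,
        (forall t, 0 <= t <= 1 -> SO m (Rt t)) /\
        (forall i j, continuity (fun t => Rt t i j)) /\
        Rt 0 = idmat m /\
        mvec (Dim N m) (Tblock N m 0 (Rt 1)) w = w')) /\
  (* (c) *)
  ((forall e f mu mu', Eloc N m e -> Eloc N m f -> (mu < 2 ^ N)%nat -> (mu' < 2 ^ N)%nat ->
      dotm (Dim N m) (tens e f) (Phi N mu) = dotm (Dim N m) (tens e f) (Phi N mu')) /\
   (forall mu mu', (mu < 2 ^ N)%nat -> (mu' < 2 ^ N)%nat -> mu <> mu' -> Phi N mu <> Phi N mu')) /\
  (* (d) *)
  ((forall y, (y < 2 ^ N)%nat -> EAB N m (Feff N y)) /\
   (fun i j => sumR (2 ^ N) (fun y => Feff N y i j)) = tens uvec uvec /\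
   (forall Rm x y, SO m Rm -> (x < 2 ^ N)%nat -> (y < 2 ^ N)%nat ->
      dotm (Dim N m) (Feff N y) (mmul (Dim N m) (Tblock N m x Rm) (Phi N 0)) =
        dotm (Dim N m) (Feff N y) (Phi N x) /\
      dotm (Dim N m) (Feff N y) (Phi N x) = kdelta y x) /\
   (forall Rm, SO m Rm ->
      mutual_info (2 ^ N) (2 ^ N) (fun _ => / 2 ^ N)
        (fun x y => dotm (Dim N m) (Feff N y) (mmul (Dim N m) (Tblock N m x Rm) (Phi N 0)))
      = INR N) /\
   capacity_is N m 1).
Proof.
  refine (conj (conj _ (conj _ _)) (conj (conj _ _) (conj (conj _ _) (conj _ (conj _ (conj _ (conj _ _))))))).
  - intros phi; apply Lambda_iff.
  - intros phi H; apply convm_single; left; auto.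
  - apply partA3.
  - intros T HT; split; [|split].
    + intros w Hw; apply inT_Omega; auto.
    + intros; apply inT_AB_l; auto.
    + intros; apply inT_AB_r; auto.
  - intros Hm2 w w' Hw Hw'; apply partB2; auto.
  - intros e f mu mu' He Hf _ _. rewrite !(dotm_tens_Phi N m) by auto. auto.
  - apply partC2.
  - intros; apply partD1; auto.
  - apply partD2.
  - intros Rm x y _ Hx Hy; apply partD3; auto.
  - intros; apply partD4; auto.
  - apply partD5; auto.
Qed.
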